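(* Let $K=\mathbb{R}$ and assume $\tau_{(i)}>0$, $\eta_{(i)}>-1$, $\eta_{(i)}\neq0$ for all $i\in\Omega$. For $X\subseteq\Omega$ and $D,A\in\mathcal{I}^{\mathbf{c}}(X)$ with $A\subsetneqq D$, we have $\pi(X,D)\neq\pi(X,A)$ and $\pi(X,D)\curlyeqprec\pi(X,A)$.
   Context: $\Omega$ is a finite set and $\mathbf{P}=(\Omega,\preccurlyeq_{\mathbf{P}})$ a poset. For $Y\subseteq\Omega$: $\max(Y)$ is the set of maximal elements of $Y$ w.r.t. $\preccurlyeq_{\mathbf{P}}$; $\mathcal{I}(Y)$ is the set of down-closed subsets of $Y$ with the induced order; $\mathcal{I}^{\mathbf{c}}(Y)$ is the set of up-closed subsets of $Y$. $\tau,\eta\in\mathbb{R}^{\Omega}$. For $D,I\subseteq\Omega$, $\varphi(D,I)=(-1)^{|I\cap D|}\big(\prod_{i\in I-\max(I)}\tau_{(i)}\big)\big(\prod_{i\in\max(I)-D}\eta_{(i)}\big)$ if $I\cap D\subseteq\max(I)$, and $0$ otherwise; for $D\subseteq Y\subseteq\Omega$, $\pi(Y,D)=\sum_{I\in\mathcal{I}(Y)}\varphi(D,I)x^{|I|}\in\mathbb{R}[x]$. For $f\in\mathbb{R}[x]$, $f_{(k)}$ is the coefficient of $x^k$. The total order $\curlyeqprec$ on $\mathbb{R}[x]$: $f\curlyeqprec g$ iff (i) $f=g$, or (ii) $\deg f\leqslant\deg g-1$, or (iii) $\deg f=\deg g$ and there exists $k\in\mathbb{N}$ with $f_{(k)}<g_{(k)}$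 and $f\equiv g\pmod{x^k}$. *)

(* Defs.v *)
From HB Require Import structures.
From mathcomp Require Import all_boot all_order all_algebra.
From mathcomp Require Import reals.
Set Implicit Arguments. Unset Strict Implicit. Unset Printing Implicit Defensive.
Import Order.TTheory GRing.Theory Num.Theory.
Local Open Scope ring_scope.

Section Defs.
Context {disp : Order.disp_t} {T : finPOrderType disp} {R : realType}.
Variables (tau eta : T -> R).

Definition maxset_of (Y : {set T}) : {set T} :=
  [set y in Y | [forall z in Y, ((y <= z)%O) ==> (z == y)]].

Definition downclosed (Y I : {set T}) : bool :=
  (I \subset Y) && [forall i in I, forall j in Y, ((j <= i)%O) ==> (j \in I)].

(* I is an up-closed subset of Y (an element of I^c(Y)) *)
Definition upclosed (Y I : {set T}) : bool :=
  (I \subset Y) && [forall i in I, forall j in Y, ((i <= j)%O) ==> (j \in I)].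

Definition phi_coef (D I : {set T}) : R :=
  if (I :&: D) \subset maxset_of I then
    (-1) ^+ #|I :&: D| * (\prod_(i in I :\: maxset_of I) tau i)
      * (\prod_(i in maxset_of I :\: D) eta i)
  else 0.

Definition pi_poly (Y D : {set T}) : {poly R} :=
  \sum_(I : {set T} | downclosed Y I) phi_coef D I *: 'X^#|I|.
End Defs.

(* The total order on R[x]:  f <= g iff f = g, or deg f <= deg g - 1,
   or deg f = deg g and some k has f_(k) < g_(k) and f = g mod x^k.
   Degrees are compared via size (= deg + 1, size 0 = 0). *)
Definition polyle {R : realType} (f g : {poly R}) : Prop :=
  f = g \/ (size f < size g)%N \/
  (size f = size g /\ exists k : nat, f`_k < g`_k /\ ('X^k %| f - g)%R).

(* Main.v *)
Require Import Defs.
From HB Require Import structures.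
From mathcomp Require Import all_boot all_order all_algebra.
From mathcomp Require Import reals.
From mathcomp Require Import zify ring lra.
Import Order.TTheory GRing.Theory Num.Theory.
Local Open Scope ring_scope.

Section Aux.
Variables (disp : Order.disp_t) (T : finPOrderType disp) (R : realType)
  (tau eta : T -> R).
Hypotheses (Htau : forall i, 0 < tau i) (Heta1 : forall i, -1 < eta i)
  (Heta0 : forall i, eta i != 0).
Variable X : {set T}.

Definition minD (D : {set T}) :=
  [set d in D | [forall z in D, ((z <= d)%O) ==> (z == d)]].
Definition dn (e : T) := [set j in X | (j <= e)%O].
Definition I0 (D : {set T}) := (X :\: D) :|: minD D.
Definition NN (D : {set T}) := (#|X :\: D| + #|minD D|)%N.

Let pi := pi_poly tau eta.
Let phi := phi_coef tau eta.

Lemma coef_pi Y D k : (pi Y D)`_k =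
  \sum_(I : {set T} | downclosed Y I && (#|I| == k)) phi D I.
Proof.
rewrite /pi /pi_poly coef_sum [RHS]big_mkcondr /=; apply: eq_bigr => I _.
rewrite coefZ coefXn (eq_sym k); case: (#|I| == k); by rewrite ?mulr1 ?mulr0.
Qed.

Lemma phi_nz D I : (I :&: D) \subset maxset_of I -> phi D I != 0.
Proof.
move=> h; rewrite /phi /phi_coef h !mulf_neq0 ?signr_eq0 //;
  apply/prodf_neq0 => i _; [by rewrite gt_eqF | exact: Heta0].
Qed.

Lemma phi_supp {D I : {set T}} : phi D I != 0 -> (I :&: D) \subset maxset_of I.
Proof. by rewrite /phi /phi_coef; case: ifP => // _; rewrite eqxx. Qed.

Lemma dnP {I : {set T}} {a z : T} : downclosed X I -> a \in I -> z \in X ->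
  (z <= a)%O -> z \in I.
Proof.
case/andP=> _ /forallP Idn aI zX za.
by move: (Idn a); rewrite aI /= => /forallP /(_ z); rewrite zX za.
Qed.

Lemma upP {D : {set T}} {a z : T} : upclosed X D -> a \in D -> z \in X ->
  (a <= z)%O -> z \in D.
Proof.
case/andP=> _ /forallP Dup aD zX az.
by move: (Dup a); rewrite aD /= => /forallP /(_ z); rewrite zX az.
Qed.

Lemma inter_min {D I : {set T}} : upclosed X D -> downclosed X I ->
  (I :&: D) \subset maxset_of I -> I :&: D \subset minD D.
Proof.
move=> HD HI sub; have DX : D \subset X by case/andP: HD.
apply/subsetP => a; rewrite inE => /andP[aI aD]; rewrite inE aD /=.
apply/forallP => z; apply/implyP => zD; apply/implyP => za.
have zI : z \in I by apply: (dnP HI aI) => //; exact: (subsetP DX).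
have : z \in maxset_of I by apply: (subsetP sub); rewrite inE zI zD.
rewrite inE => /andP[_ /forallP /(_ a)]; rewrite aI za /= => /eqP ->.
by [].
Qed.

Lemma card_le {D I : {set T}} : upclosed X D -> downclosed X I -> phi D I != 0 ->
  (#|I| <= NN D)%N.
Proof.
move=> HD HI nz; have IX : I \subset X by case/andP: HI.
have h1 := inter_min HD HI (phi_supp nz).
have h2 : I :\: D \subset X :\: D by apply: setSD.
rewrite -(cardsID D I) /NN addnC leq_add //; exact: subset_leq_card.
Qed.

Lemma card_eq {D I : {set T}} : upclosed X D -> downclosed X I -> phi D I != 0 ->
  #|I| = NN D -> I = I0 D.
Proof.
move=> HD HI nz e; have IX : I \subset X by case/andP: HI.
have h1 := inter_min HD HI (phi_supp nz).
have h2 : I :\: D \subset X :\: D by apply: setSD.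
have c1 : (#|I :&: D| <= #|minD D|)%N := subset_leq_card h1.
have c2 : (#|I :\: D| <= #|X :\: D|)%N := subset_leq_card h2.
move: e; rewrite -(cardsID D I) /NN => e.
have e1 : I :&: D = minD D.
  have c3 : (#|minD D| <= #|I :&: D|)%N by lia.
  by apply/eqP; rewrite eqEcard h1 /=.
have e2 : I :\: D = X :\: D.
  have c3 : (#|X :\: D| <= #|I :\: D|)%N by lia.
  by apply/eqP; rewrite eqEcard h2 /=.
by rewrite -(setID I D) e1 e2 /I0 setUC.
Qed.

Lemma I0_props {D : {set T}} : upclosed X D ->
  [/\ downclosed X (I0 D), (I0 D :&: D) \subset maxset_of (I0 D)
    & #|I0 D| = NN D].
Proof.
move=> HD; have DX : D \subset X by case/andP: HD.
have mD : minD D \subset D by apply/subsetP => x; rewrite inE => /andP[].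
have I0D : forall x, x \in I0 D -> x \in D -> x \in minD D.
  by move=> x; rewrite !inE => /orP[/andP[/negP]|] //.
split.
- apply/andP; split.
    apply/subsetP => x; rewrite !inE => /orP[/andP[]//|/andP[xD _]].
    exact: (subsetP DX).
  apply/forallP => i; apply/implyP => iI; apply/forallP => j; apply/implyP => jX.
  apply/implyP => ji.
  case jD: (j \in D); last by rewrite !inE jD jX.
  have iX : i \in X.
    by move: iI; rewrite !inE => /orP[/andP[]//|/andP[iD _]]; exact: (subsetP DX).
  have iD : i \in D by apply: (upP HD jD iX ji).
  move: (I0D i iI iD); rewrite inE iD /= => /forallP /(_ j); rewrite jD ji /=.
  by move=> /eqP ->.
- apply/subsetP => a; rewrite inE => /andP[aI aD].
  rewrite inE aI /=; apply/forallP => z; apply/implyP => zI; apply/implyP => az.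
  have zX : z \in X.
    by move: zI; rewrite !inE => /orP[/andP[]//|/andP[zD _]]; exact: (subsetP DX).
  have zD : z \in D by apply: (upP HD aD zX az).
  move: (I0D z zI zD); rewrite inE zD /= => /forallP /(_ a); rewrite aD az /=.
  by move=> /eqP ->.
- rewrite /I0 cardsU /NN.
  suff -> : (X :\: D) :&: minD D = set0 by rewrite cards0 subn0.
  apply/setP => x; rewrite !inE; apply/negP => /and3P[/andP[xnD _] xD _].
  by rewrite xD in xnD.
Qed.

Lemma lead {D : {set T}} : upclosed X D -> (pi X D)`_(NN D) != 0.
Proof.
move=> HD; have [H1 H2 H3] := I0_props HD.
rewrite coef_pi (bigD1 (I0 D)) /=; last by rewrite H1 H3 eqxx.
rewrite big1 ?addr0; first exact: phi_nz.
move=> I /andP[/andP[HI /eqP Ic] ne]; apply/eqP/negPn/negP => nz.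
by move: ne; rewrite (card_eq HD HI nz Ic) eqxx.
Qed.

Lemma size_le {D : {set T}} : upclosed X D -> (size (pi X D) <= (NN D).+1)%N.
Proof.
move=> HD; apply/leq_sizeP => k lt; rewrite coef_pi big1 // => I /andP[HI /eqP Ik].
apply/eqP/negPn/negP => nz; have := card_le HD HI nz; lia.
Qed.

Lemma size_ge {D : {set T}} : upclosed X D -> (NN D < size (pi X D))%N.
Proof.
move=> HD; rewrite ltnNge; apply/negP => h; move: (lead HD).
by rewrite nth_default // eqxx.
Qed.

Lemma NN_le {D A : {set T}} : upclosed X D -> upclosed X A -> A \subset D -> (NN D <= NN A)%N.
Proof.
move=> HD HA AD; have DX : D \subset X by case/andP: HD.
have AX : A \subset X by case/andP: HA.
have sub : minD D \subset (D :\: A) :|: minD A.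
  apply/subsetP => x; rewrite !inE => /andP[xD /forallP H].
  case xA: (x \in A) => /=; last by rewrite xD.
  apply/forallP => z.
  apply/implyP => zA; move: (H z); rewrite (subsetP AD z zA) //.
have c := subset_leq_card sub; rewrite cardsU in c.
rewrite /NN !cardsD (setIidPr DX) (setIidPr AX) (setIidPr AD) in c *.
have := subset_leq_card AD; have := subset_leq_card DX; lia.
Qed.

Lemma agree {D A I : {set T}} : A \subset D -> I :&: (D :\: A) = set0 ->
  phi D I = phi A I.
Proof.
move=> AD H0.
have hx : forall x, x \in I -> (x \in D) = (x \in A).
  move=> x xI; case xA: (x \in A); first by rewrite (subsetP AD).
  apply/negP => xD; have : x \in I :&: (D :\: A) by rewrite !inE xI xA xD.
  by rewrite H0 inE.
have e1 : I :&: D = I :&: A.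
  by apply/setP => x; rewrite !inE; case xI: (x \in I) => //=; exact: hx.
have e2 : maxset_of I :\: D = maxset_of I :\: A.
  apply/setP => x; rewrite !in_setD; case xm: (x \in maxset_of I); rewrite ?andbF //.
  by rewrite !andbT hx //; move: xm; rewrite /maxset_of inE => /andP[].
by rewrite /phi /phi_coef e1 e2.
Qed.

Lemma dn_down e : downclosed X (dn e).
Proof.
apply/andP; split; first by apply/subsetP => x; rewrite inE => /andP[].
apply/forallP => i; apply/implyP; rewrite inE => /andP[_ ie].
apply/forallP => j; apply/implyP => jX; apply/implyP => ji.
by rewrite inE jX (le_trans ji ie).
Qed.

Lemma small {D A I : {set T}} {s : nat} : upclosed X D ->
  (forall e, e \in D :\: A -> (s <= #|dn e|)%N) -> downclosed X I ->
  (#|I| < s)%N -> I :&: (D :\: A) = set0.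
Proof.
move=> HD smin HI lt; apply/setP => x; rewrite in_setI in_set0.
apply/negP => /andP[xI xDA].
have xX : x \in X.
  case/andP: HD => DX _; apply: (subsetP DX); move: xDA; rewrite inE => /andP[] //.
have sub : dn x \subset I.
  by apply/subsetP => j; rewrite inE => /andP[jX jx]; exact: (dnP HI xI jX jx).
have c : (#|dn x| <= #|I|)%N := subset_leq_card sub.
have := smin x xDA; lia.
Qed.

Lemma dn_neg {D A : {set T}} {e : T} {s : nat} : upclosed X D -> upclosed X A ->
  (forall e, e \in D :\: A -> (s <= #|dn e|)%N) -> e \in D :\: A ->
  #|dn e| = s -> phi D (dn e) - phi A (dn e) < 0.
Proof.
move=> HD HA smin eDA es.
have DX : D \subset X by case/andP: HD.
move: (eDA); rewrite inE => /andP[enA eD].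
have eX : e \in X by apply: (subsetP DX).
have dnx : forall x, x \in dn e -> x \in D -> x = e.
  move=> x; rewrite inE => /andP[xX xe] xD.
  have xnA : x \notin A.
    by apply/negP => xA; move: enA; rewrite (upP HA xA eX xe).
  have xDA : x \in D :\: A by rewrite inE xnA xD.
  apply/eqP; apply/negPn/negP => nxe.
  have pr : dn x \proper dn e.
    apply/properP; split.
      apply/subsetP => j; rewrite !inE => /andP[jX jx]; rewrite jX /=.
      exact: le_trans jx xe.
    exists e; first by rewrite inE eX lexx.
    rewrite inE eX /=; apply/negP => ex; move/negP: nxe; apply.
    by apply/eqP; apply: (@le_anti _ T); apply/andP; split.
  have c : (#|dn x| < #|dn e|)%N := proper_card pr.
  by have := leq_ltn_trans (smin x xDA) c; rewrite es ltnn.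
have eA : dn e :&: A = set0.
  apply/setP => x; rewrite in_setI in_set0; apply/negP => /andP[].
  rewrite inE => /andP[xX xe] xA; move: enA; by rewrite (upP HA xA eX xe).
have eDe : dn e :&: D = [set e].
  apply/setP => x; rewrite in_setI in_set1; apply/idP/idP.
    by move=> /andP[xd xD]; rewrite (dnx x xd xD).
  by move=> /eqP ->; rewrite inE eX lexx eD.
have mx : maxset_of (dn e) = [set e].
  apply/setP => x; rewrite /maxset_of inE in_set1; apply/idP/idP.
    move=> /andP[xd /forallP /(_ e) /implyP H].
    have ed : e \in dn e by rewrite inE eX lexx.
    move: xd; rewrite inE => /andP[_ xe].
    by move: (H ed) => /implyP /(_ xe); rewrite eq_sym.
  move=> /eqP ->; rewrite inE eX lexx /=; apply/forallP => z; apply/implyP.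
  rewrite inE => /andP[_ ze]; apply/implyP => ez; apply/eqP.
  by apply: le_anti; apply/andP; split.
have h1 : [set e] :\: D = set0.
  apply/setP => x; rewrite !inE; apply/negP => /andP[xD /eqP xe].
  by move: xD; rewrite xe eD.
have h2 : [set e] :\: A = [set e].
  by apply/setP => x; rewrite !inE; apply/andb_idl => /eqP ->.
rewrite /phi /phi_coef eDe eA mx subxx sub0set cards1 cards0 expr1 expr0 h1 h2.
rewrite big_set0 big_set1.
set P := \prod_(i in _) tau i.
have Pp : 0 < P by apply: prodr_gt0 => i _; exact: Htau.
have q : 0 < P * (1 + eta e).
  by apply: mulr_gt0 => //; have := Heta1 e; lra.
nra.
Qed.

Lemma main (D A : {set T}) : upclosed X D -> upclosed X A -> A \proper D ->
  pi X D != pi X A /\ polyle (pi X D) (pi X A).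
Proof.
move=> HD HA /[dup] pAD /properP [AD [e0 e0D e0nA]].
pose P := fun k => [exists e in D :\: A, #|dn e| == k].
have exP : exists k, P k.
  by exists #|dn e0|; apply/existsP; exists e0; rewrite inE e0nA e0D eqxx.
case: (ex_minnP exP) => s Ps smin'.
have smin : forall e, e \in D :\: A -> (s <= #|dn e|)%N.
  by move=> e eDA; apply: smin'; apply/existsP; exists e; rewrite eDA eqxx.
case/existsP: Ps => e1 /andP[e1DA /eqP e1s].
have low : forall i, (i < s)%N -> (pi X D)`_i = (pi X A)`_i.
  move=> i lt; rewrite !coef_pi; apply: eq_bigr => I /andP[HI /eqP Ic].
  by apply: agree AD _; apply: (small HD smin HI); lia.
have neg : (pi X D)`_s - (pi X A)`_s < 0.
  rewrite !coef_pi -sumrB (bigD1 (dn e1)) /=; last by rewrite dn_down e1s eqxx.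
  have hneg := dn_neg HD HA smin e1DA e1s.
  set S := \big[_/_]_(_ | _) _.
  suff hS : S <= 0 by lra.
  apply: sumr_le0 => I /andP[/andP[HI /eqP Ic] _].
  case: (set_0Vmem (I :&: (D :\: A))) => [H0|[x]].
    by rewrite (agree AD H0) subrr.
  rewrite in_setI => /andP[xI xDA].
  have xX : x \in X.
    case/andP: HD => DX _; apply: (subsetP DX); move: xDA; rewrite inE => /andP[] //.
  have sub : dn x \subset I.
    by apply/subsetP => j; rewrite inE => /andP[jX jx]; exact: (dnP HI xI jX jx).
  have c : (#|dn x| <= #|I|)%N := subset_leq_card sub.
  have c2 := smin x xDA.
  have c3 : (#|I| <= #|dn x|)%N by rewrite Ic.
  have eq : dn x = I by apply/eqP; rewrite eqEcard sub.
  rewrite -eq; apply: ltW; apply: dn_neg HD HA smin xDA _; by rewrite eq Ic.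
split.
  by apply/negP => /eqP E; move: neg; rewrite E subrr ltxx.
right; have h1 := size_le HD; have h2 := size_ge HA; have h3 := NN_le HD HA AD.
case: (ltngtP (size (pi X D)) (size (pi X A))) => [lt|gt|eq]; [by left | lia | right].
split => //; exists s; split; first by rewrite -subr_lt0.
apply/modp_eq0P; rewrite -Pdiv.IdomainMonic.take_poly_modp; apply/polyP => i.
rewrite coef_take_poly coef0; case: ifP => // lt; by rewrite coefB low // subrr.
Qed.
End Aux.

Theorem theorem3p4 (disp : Order.disp_t) (T : finPOrderType disp) (R : realType)
  (tau eta : T -> R) :
  (forall i, 0 < tau i) -> (forall i, -1 < eta i) -> (forall i, eta i != 0) ->
  forall X D A : {set T}, upclosed X D -> upclosed X A -> A \proper D ->
  pi_poly tau eta X D != pi_poly tau eta X A /\ polyle (pi_poly tau eta X D) (pi_poly tau eta X A).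
Proof.
move=> Htau Heta1 Heta0 X D A; exact: main.
Qed.
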